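(* For $n\ge 2$, $$|\mathcal C_n(321)|=|\mathcal A_{n-1}|,$$ where $\mathcal A_{m}$ is the set of permutations in $S_{m}$ avoiding all six vincular patterns $\underline{32}\,\underline{41}$, $\underline{14}\,\underline{23}$, $\underline{41}\,\underline{32}$, $\underline{23}\,\underline{14}$, $\underline{23}\,\underline{1}$, $\underline{1}\,\underline{32}$.
   Context: Permutations of $[n]=\{1,\dots,n\}$ are written in one-line notation $\pi=\pi_1\cdots\pi_n$. A permutation contains $321$ if there are $i<j<k$ with $\pi_i>\pi_j>\pi_k$, and avoids $321$ otherwise. $\mathcal C_n$ is the set of cyclic permutations of $[n]$ (a single $n$-cycle), and $\mathcal C_n(321)$ those avoiding $321$. Vincular patterns: for a sequence $w=w_1\cdots w_N$ of distinct integers, - $w$ contains $\underline{32}\,\underline{41}$ if there are $i,j$ with $i+2\le j\le N-1$ and $w_{j+1}<w_{i+1}<w_i<w_j$; - $w$ contains $\underline{14}\,\underline{23}$ if there are such $i,j$ with $w_i<w_j<w_{j+1}<w_{i+1}$; - $w$ contains $\underline{41}\,\underline{32}$ if there are such $i,j$ with $w_{i+1}<w_{j+1}<w_j<w_i$; - $w$ contains $\underline{23}\,\underline{14}$ if there are such $i,j$ with $w_j<w_i<w_{i+1}<w_{j+1}$; - $w$ contains $\underline{23}\,\underline{1}$ if there is $i$ with $i+1\le N-1$ and $w_N<w_i<w_{i+1}$; - $w$ contains $\underline{1}\,\underline{32}$ if there is $j$ with $2\le j\le N-1$ and $w_1<w_{j+1}<w_j$. $w$ avoids a pattern if it does not contain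 it. *)

(* Defs.v *)
From mathcomp Require Import all_boot all_order all_fingroup.
Set Implicit Arguments. Unset Strict Implicit. Unset Printing Implicit Defensive.

(* One-line notation of s : 'S_n, as a sequence of naturals (values 0..n-1;
   all patterns are order-based so the shift from 1..n is irrelevant). *)
Definition oneline n (s : 'S_n) : seq nat := [seq val (s i) | i <- enum 'I_n].

Definition is_cyclic n (s : 'S_n) : bool :=
  [exists x : 'I_n, porbit s x == [set: 'I_n]].

Definition contains321 n (s : 'S_n) : bool :=
  [exists i : 'I_n, exists j : 'I_n, exists k : 'I_n,
     [&& i < j, j < k, s j < s i & s k < s j]].

(* Vincular patterns on a sequence w = w_1 ... w_N; below indices are
   0-based: w_{i} (1-based) is nth 0 w (i-1). *)
Section Vincular.
Variable w : seq nat.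
Local Notation N := (size w).
Let wn (i : nat) : nat := nth 0 w i.

(* generic two-block pattern: 1-based i, j with i+2 <= j <= N-1,
   i.e. 0-based i, j with i+2 <= j and j+1 < N *)
Definition two_block (P : nat -> nat -> nat -> nat -> bool) : bool :=
  [exists i : 'I_N, exists j : 'I_N,
     [&& i.+2 <= j, j.+1 < N & P (wn i) (wn (i.+1)) (wn j) (wn (j.+1))]].

Definition contains_3241 : bool := two_block (fun a b c d => [&& d < b, b < a & a < c]).
Definition contains_1423 : bool := two_block (fun a b c d => [&& a < c, c < d & d < b]).
Definition contains_4132 : bool := two_block (fun a b c d => [&& b < d, d < c & c < a]).
Definition contains_2314 : bool := two_block (fun a b c d => [&& c < a, a < b & b < d]).

(* 23_1: 1-based i with i+1 <= N-1 and w_N < w_i < w_{i+1} *)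
Definition contains_231 : bool :=
  [exists i : 'I_N, (i.+2 < N) && (wn (N.-1) < wn i < wn (i.+1))].

(* 1_32: 1-based j with 2 <= j <= N-1 and w_1 < w_{j+1} < w_j *)
Definition contains_132 : bool :=
  [exists j : 'I_N, [&& 0 < j, j.+1 < N & wn 0 < wn (j.+1) < wn j]].

Definition avoids_all_six : bool :=
  ~~ [|| contains_3241, contains_1423, contains_4132, contains_2314,
         contains_231 | contains_132].
End Vincular.

Definition A_set m : {set 'S_m} := [set s : 'S_m | avoids_all_six (oneline s)].
Definition C321 n : {set 'S_n} := [set s : 'S_n | is_cyclic s && ~~ contains321 s].

(* Main.v *)
Require Import Defs.
From mathcomp Require Import all_boot all_order all_fingroup.
From mathcomp Require Import zify.
Set Implicit Arguments. Unset Strict Implicit. Unset Printing Implicit Defensive.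

Definition Wf (m : nat) (w : nat -> nat) (k : nat) : nat :=
  if k is k'.+1 then w k' else m.
Definition Sf m w k := Wf m w (k.+1 %% m.+1).

Definition Viol m w : Prop := exists i j, [/\ i < m.+1, j < m.+1, Wf m w i < Wf m w j &
  ((Wf m w i < Sf m w i /\ Wf m w j < Sf m w j /\ Sf m w j < Sf m w i) \/
   (Sf m w i <= Wf m w i /\ Sf m w j <= Wf m w j /\ Sf m w j < Sf m w i))].

Definition Q1 m (w : nat -> nat) := exists i j, [/\ i.+2 <= j, j.+1 < m &
   [&& w j.+1 < w i.+1, w i.+1 < w i & w i < w j]].
Definition Q2 m (w : nat -> nat) := exists i j, [/\ i.+2 <= j, j.+1 < m &
   [&& w i < w j, w j < w j.+1 & w j.+1 < w i.+1]].
Definition Q3 m (w : nat -> nat) := exists i j, [/\ i.+2 <= j, j.+1 < m &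
   [&& w i.+1 < w j.+1, w j.+1 < w j & w j < w i]].
Definition Q4 m (w : nat -> nat) := exists i j, [/\ i.+2 <= j, j.+1 < m &
   [&& w j < w i, w i < w i.+1 & w i.+1 < w j.+1]].
Definition Q5 m (w : nat -> nat) := exists i, i.+2 < m /\ (w m.-1 < w i < w i.+1).
Definition Q6 m (w : nat -> nat) := exists j, [/\ 0 < j, j.+1 < m & w 0 < w j.+1 < w j].

Lemma classify m w k : 0 < m -> k < m.+1 ->
  [\/ [/\ k = 0, Wf m w k = m & Sf m w k = w 0],
      [/\ k = m, Wf m w k = w m.-1 & Sf m w k = m] |
      exists k', [/\ k = k'.+1, k'.+1 < m, Wf m w k = w k' & Sf m w k = w k'.+1]].
Proof.
move=> m0 hk; case: k hk => [|k] hk.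
  by constructor 1; split => //; rewrite /Sf modn_small.
have [ke|klt] := eqVneq k.+1 m.
  by constructor 2; split => //; rewrite -?ke /Sf ?modnn //.
constructor 3; exists k; split => //; first lia.
by rewrite /Sf modn_small //; lia.
Qed.

Lemma viol_iff m w : 0 < m -> (forall k, k < m -> w k < m) ->
  (forall k, k.+1 < m -> w k.+1 <> w k) ->
  Viol m w <-> (Q1 m w \/ Q2 m w \/ Q3 m w \/ Q4 m w \/ Q5 m w \/ Q6 m w).
Proof.
move=> m0 wb wn; split.
- case=> i [j] [hi hj].
  case: (classify w m0 hi) => [[-> -> ->]|[-> -> ->]|[i' [-> hi' -> ->]]];
  case: (classify w m0 hj) => [[-> -> ->]|[-> -> ->]|[j' [-> hj' -> ->]]].
  + lia.
  + have := wb m.-1; lia.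
  + have := wb j'; lia.
  + lia.
  + lia.
  + have := wb m.-1; have := wb j'; have := wb j'.+1; have := wn j'.
    move=> ? ? ? ? hW [|]; last lia. move=> [h1 [h2 h3]].
    do 4 right; left; exists j'; split; last by apply/andP; split; lia.
    have [e|ne] := eqVneq j'.+2 m; last lia.
    by exfalso; rewrite -e /= in hW; lia.
  + have := wb i'; have := wb i'.+1; have := wn i'; have := wn 0.
    move=> ? ? ? ? hW [|]; first lia. move=> [h1 [h2 h3]].
    have : i' != 0 by apply/eqP => e; subst i'; lia.
    do 5 right; exists i'; split; [lia|lia|apply/andP; split; lia].
  + have := wb i'; have := wb i'.+1; lia.
  + have := wb i'; have := wb i'.+1; have := wb j'; have := wb j'.+1;
    have := wn i'; have := wn j'.
    move=> ? ? ? ? ? ? hW.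
    have nij : i' != j' by apply/eqP => e; subst i'; lia.
    move=> [|] [h1 [h2 h3]].
    * have [lt|ge] := ltnP i' j'.
      - right; left; exists i', j'; split; [|lia|].
          have [e|ne] := eqVneq j' i'.+1; last lia. subst j'; lia.
        apply/and3P; split; lia.
      - do 3 right; left; exists j', i'; split; [|lia|].
          have [e|ne] := eqVneq i' j'.+1; last lia. subst i'; lia.
        apply/and3P; split; lia.
    * have [lt|ge] := ltnP i' j'.
      - left; exists i', j'; split; [|lia|].
          have [e|ne] := eqVneq j' i'.+1; last lia. subst j'; lia.
        apply/and3P; split; lia.
      - do 2 right; left; exists j', i'; split; [|lia|].
          have [e|ne] := eqVneq i' j'.+1; last lia. subst i'; lia.
        apply/and3P; split; lia.
- have S1 k : k.+1 < m -> Sf m w k.+1 = w k.+1 by move=> h; rewrite /Sf modn_small //; lia.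
  have Sm : Sf m w m = m by rewrite /Sf modnn.
  have S0 : Sf m w 0 = w 0 by rewrite /Sf modn_small //; lia.
  case=> [[i [j [h1 h2 /and3P[a b c]]]]|[[i [j [h1 h2 /and3P[a b c]]]]|[[i [j [h1 h2 /and3P[a b c]]]]|[[i [j [h1 h2 /and3P[a b c]]]]|[[i [h1 /andP[a b]]]|[j [h1 h2 /andP[a b]]]]]]]].
  + exists i.+1, j.+1; rewrite /= !S1; [|lia|lia]. split; lia.
  + exists i.+1, j.+1; rewrite /= !S1; [|lia|lia]. split; lia.
  + exists j.+1, i.+1; rewrite /= !S1; [|lia|lia]. split; lia.
  + exists j.+1, i.+1; rewrite /= !S1; [|lia|lia]. split; lia.
  + exists m, i.+1; rewrite Sm S1; last lia.
    have -> : Wf m w m = w m.-1 by case: (m) m0.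
    have := wb i.+1; have := wb m.-1; rewrite /=; split; lia.
  + exists j.+1, 0; rewrite S0 S1 /=; last lia. have := wb j; have := wb 0; split; lia.
Qed.

Lemma card_lt_set n a : a <= n -> #|[set v : 'I_n | v < a]| = a.
Proof.
move=> an.
have -> : [set v : 'I_n | v < a] = [set widen_ord an i | i : 'I_a].
  apply/setP => v; rewrite inE; apply/idP/imsetP => [lt|[i _ ->]].
    by exists (Ordinal lt) => //; apply: val_inj.
  exact: (ltn_ord i).
by rewrite card_imset ?card_ord // => i j /(congr1 val) /= e; apply: val_inj.
Qed.

Lemma card_ge_set n a : a <= n -> #|~: [set v : 'I_n | v < a]| = n - a.
Proof.
move=> an; have := cardsC [set v : 'I_n | v < a]; rewrite card_lt_set // card_ord.
lia.
Qed.

Definition ViolP n (s : 'S_n) : Prop := exists x y : 'I_n, x < y /\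
  ((x < s x /\ y < s y /\ s y < s x) \/ (s x <= x /\ s y <= y /\ s y < s x)).

Lemma c321_viol n (s : 'S_n) : contains321 s <-> ViolP s.
Proof.
split.
- case/existsP => i /existsP [j /existsP [k /and4P [ij jk a b]]].
  have [lt|ge] := ltnP j (s j).
    exists i, j; split => //; left; split => //; lia.
  exists j, k; split => //; right; split => //; lia.
- case=> x [y [xy [[h1 [h2 h3]]|[h1 [h2 h3]]]]].
  + case: (boolP [exists z : 'I_n, (y < z) && (s z < s y)]).
      case/existsP => z /andP [yz zs].
      by rewrite /contains321; apply/existsP; exists x; apply/existsP; exists y; apply/existsP; exists z; apply/and4P.
    rewrite negb_exists => /forallP H.
    exfalso.
    pose A := x |: ~: [set v : 'I_n | v < y].
    pose B := ~: [set v : 'I_n | v < s y].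
    have sub : s @: A \subset B.
      apply/subsetP => _ /imsetP [z zA ->].
      rewrite !inE -leqNgt; move: zA; rewrite !inE -leqNgt => /orP [/eqP -> | yz]; first lia.
      have := H z; rewrite negb_and -!leqNgt.
      have [e|ne] := eqVneq z y; first by subst z.
      move: ne; rewrite -val_eqE /= => ne; move=> /orP [] ?; lia.
    have := subset_leq_card sub; rewrite card_imset; last exact: perm_inj.
    have := ltn_ord (s y); have := ltn_ord y => ? ?.
    rewrite cardsU1 !card_ge_set; try lia.
  + case: (boolP [exists z : 'I_n, (z < x) && (s x < s z)]).
      case/existsP => z /andP [zx xs].
      by rewrite /contains321; apply/existsP; exists z; apply/existsP; exists x; apply/existsP; exists y; apply/and4P.
    rewrite negb_exists => /forallP H.
    exfalso.
    pose A := y |: [set v : 'I_n | v < x.+1].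
    pose B := [set v : 'I_n | v < (s x).+1].
    have sub : s @: A \subset B.
      apply/subsetP => _ /imsetP [z zA ->].
      rewrite !inE; move: zA; rewrite !inE => /orP [/eqP -> | zx]; first lia.
      have := H z; rewrite negb_and -!leqNgt.
      have [e|ne] := eqVneq z x; first by subst z.
      move: ne; rewrite -val_eqE /= => ne; move=> /orP [] ?; lia.
    have := subset_leq_card sub; rewrite card_imset; last exact: perm_inj.
    have := ltn_ord (s x); have := ltn_ord x; have := ltn_ord y => ? ? ?.
    rewrite cardsU1 !card_lt_set ?inE; try lia.
Qed.

Lemma two_blockP w P : two_block w P <-> exists i j, [/\ i.+2 <= j, j.+1 < size w &
  P (nth 0 w i) (nth 0 w i.+1) (nth 0 w j) (nth 0 w j.+1)].
Proof.
rewrite /two_block /=; split.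
  by case/existsP => i /existsP [j /and3P [a b c]]; exists i, j.
case=> i [j [a b c]].
have hi : i < size w by lia.
have hj : j < size w by lia.
by apply/existsP; exists (Ordinal hi); apply/existsP; exists (Ordinal hj); apply/and3P.
Qed.

Lemma c231P w : contains_231 w <-> exists i, i.+2 < size w /\
   (nth 0 w (size w).-1 < nth 0 w i < nth 0 w i.+1).
Proof.
rewrite /contains_231 /=; split.
  by case/existsP => i /andP [a b]; exists i.
case=> i [a b]; have hi : i < size w by lia.
by apply/existsP; exists (Ordinal hi); apply/andP.
Qed.

Lemma c132P w : contains_132 w <-> exists j, [/\ 0 < j, j.+1 < size w &
   nth 0 w 0 < nth 0 w j.+1 < nth 0 w j].
Proof.
rewrite /contains_132 /=; split.
  by case/existsP => i /and3P [a b c]; exists i.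
case=> i [a b c]; have hi : i < size w by lia.
by apply/existsP; exists (Ordinal hi); apply/and3P.
Qed.

Lemma size_oneline m (s : 'S_m) : size (oneline s) = m.
Proof. by rewrite /oneline size_map size_enum_ord. Qed.

Lemma nth_oneline m (s : 'S_m) (i : 'I_m) : nth 0 (oneline s) i = s i.
Proof.
by rewrite /oneline (nth_map i) ?size_enum_ord // nth_ord_enum.
Qed.

Lemma avoids_iff m (s : 'S_m) : let w := nth 0 (oneline s) in
  ~~ avoids_all_six (oneline s) <->
  (Q1 m w \/ Q2 m w \/ Q3 m w \/ Q4 m w \/ Q5 m w \/ Q6 m w).
Proof.
move=> w.
have e1 : contains_3241 (oneline s) <-> Q1 m w.
  by rewrite /contains_3241 two_blockP size_oneline.
have e2 : contains_1423 (oneline s) <-> Q2 m w.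
  by rewrite /contains_1423 two_blockP size_oneline.
have e3 : contains_4132 (oneline s) <-> Q3 m w.
  by rewrite /contains_4132 two_blockP size_oneline.
have e4 : contains_2314 (oneline s) <-> Q4 m w.
  by rewrite /contains_2314 two_blockP size_oneline.
have e5 : contains_231 (oneline s) <-> Q5 m w.
  by rewrite c231P size_oneline.
have e6 : contains_132 (oneline s) <-> Q6 m w.
  by rewrite c132P size_oneline.
rewrite /avoids_all_six /= negbK.
split.
  move=> /orP [/e1|/orP [/e2|/orP [/e3|/orP[/e4|/orP[/e5|/e6]]]]] q; tauto.
case=> [/e1 ->|[/e2 ->|[/e3 ->|[/e4 ->|[/e5 ->|/e6 ->]]]]]; by rewrite ?orbT.
Qed.

Definition rot n : 'S_n := perm (@ordS_inj n).
Definition tauf m (s : 'S_m) : 'S_m.+1 := lift_perm ord0 ord_max s.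
Definition G m (s : 'S_m) : 'S_m.+1 := ((rot m.+1) ^ (tauf s))%g.

Lemma rotX n (x : 'I_n) k : val (((rot n) ^+ k)%g x) = (x + k) %% n.
Proof.
rewrite permX; elim: k => [|k IH] /=.
  by rewrite addn0 modn_small.
rewrite /rot permE /= IH; rewrite -addn1 modnDml; congr (_ %% _); lia.
Qed.

Lemma Gpow m (s : 'S_m) (k : 'I_m.+1) : (((G s) ^+ k)%g ord_max) = tauf s k.
Proof.
rewrite /G -conjXg.
have -> : (ord_max : 'I_m.+1) = tauf s ord0 by rewrite /tauf lift_perm_id.
rewrite permJ; congr (tauf s _); apply: val_inj; rewrite rotX /= add0n modn_small //.
Qed.

Lemma Gtau m (s : 'S_m) (k : 'I_m.+1) : G s (tauf s k) = tauf s (ordS k).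
Proof. by rewrite /G permJ; congr (tauf s _); rewrite /rot permE. Qed.

Lemma tau_val m (s : 'S_m) (k : 'I_m.+1) : val (tauf s k) = Wf m (nth 0 (oneline s)) k.
Proof.
case: (unliftP ord0 k) => [j|] ->.
  by rewrite /tauf lift_perm_lift /= /bump leqNgt ltn_ord add0n nth_oneline.
by rewrite /tauf lift_perm_id.
Qed.

Lemma Gtau_val m (s : 'S_m) (k : 'I_m.+1) : val (G s (tauf s k)) = Sf m (nth 0 (oneline s)) k.
Proof. by rewrite Gtau tau_val. Qed.

Lemma violG m (s : 'S_m) : ViolP (G s) <-> Viol m (nth 0 (oneline s)).
Proof.
split.
- case=> x [y H].
  have ex : x = tauf s ((tauf s)^-1 x)%g by rewrite permKV.
  have ey : y = tauf s ((tauf s)^-1 y)%g by rewrite permKV.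
  move: H; rewrite ex ey !Gtau_val !tau_val => -[H1 H2].
  exists ((tauf s)^-1 x)%g, ((tauf s)^-1 y)%g; split => //.
- case=> i [j [hi hj H1 H2]].
  exists (tauf s (Ordinal hi)), (tauf s (Ordinal hj)).
  by rewrite !Gtau_val !tau_val.
Qed.

Lemma G_cyclic m (s : 'S_m) : is_cyclic (G s).
Proof.
apply/existsP; exists ord_max; apply/eqP/setP => y; rewrite inE.
have -> : y = tauf s ((tauf s)^-1 y)%g by rewrite permKV.
by rewrite -Gpow mem_porbit.
Qed.

Lemma G_inj m : injective (@G m).
Proof.
move=> s1 s2 e; apply/permP => k.
have := Gpow s1 (lift ord0 k); rewrite e Gpow /tauf !lift_perm_lift => /lift_inj.
done.
Qed.

Lemma G_surj m (p : 'S_m.+1) : is_cyclic p -> exists s, G s = p.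
Proof.
case/existsP => x0 /eqP hx0.
have hT : porbit p ord_max = [set: 'I_m.+1].
  apply/eqP; rewrite -hx0 eq_porbit_mem hx0; exact: in_setT.
have card : #|porbit p ord_max| = m.+1 by rewrite hT cardsT card_ord.
pose f (k : 'I_m.+1) := ((p ^+ k)%g ord_max).
have f_inj : injective f.
  move=> k1 k2; rewrite /f !permX => e; apply: val_inj.
  have U := uniq_traject_porbit p ord_max; rewrite card in U.
  have := nth_traject p (ltn_ord k1) ord_max.
  have := nth_traject p (ltn_ord k2) ord_max.
  rewrite -e => <- e2.
  by apply/eqP; rewrite -(nth_uniq ord_max _ _ U) ?size_traject ?ltn_ord // e2.
pose tau := perm f_inj.
have tau0 : tau ord0 = ord_max by rewrite permE /f expg0 perm1.
have tlt (k : 'I_m) : val (tau (lift ord0 k)) < m.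
  have := ltn_ord (tau (lift ord0 k)); rewrite ltnS leq_eqVlt => /orP [/eqP e|//].
  exfalso; have : tau (lift ord0 k) = tau ord0 by rewrite tau0; apply: val_inj.
  by move/perm_inj => /eqP; rewrite eq_sym (negbTE (neq_lift _ _)).
pose sf (k : 'I_m) : 'I_m := insubd k (val (tau (lift ord0 k))).
have sfv k : val (sf k) = val (tau (lift ord0 k)) by rewrite /sf insubdK //; exact: tlt.
have sf_inj : injective sf.
  move=> k1 k2 /(congr1 val); rewrite !sfv => /val_inj /perm_inj /lift_inj //.
pose s := perm sf_inj.
have Hts : tauf s = tau.
  apply/permP => k; case: (unliftP ord0 k) => [j|] ->.
    by apply: val_inj; rewrite /tauf lift_perm_lift /= /bump leqNgt ltn_ord add0n permE sfv.
  by rewrite /tauf lift_perm_id tau0.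
exists s; apply/permP => y.
have -> : y = tauf s ((tauf s)^-1 y)%g by rewrite permKV.
set x := ((tauf s)^-1 y)%g.
rewrite Gtau Hts !permE /f -permM -expgSr.
have := ltn_ord x; rewrite ltnS leq_eqVlt => /orP [/eqP ex|lt].
  have -> : ordS x = ord0 by apply: val_inj; rewrite /= ex modnn.
  rewrite ex expg0 perm1 permX; have := iter_porbit p ord_max; rewrite card => -> //.
by congr ((p ^+ _)%g _); rewrite /= modn_small.
Qed.

Lemma key M (s : 'S_M) : 0 < M -> contains321 (G s) <-> ~~ avoids_all_six (oneline s).
Proof.
move=> M0.
rewrite c321_viol violG viol_iff ?avoids_iff //.
- move=> k hk; have := nth_oneline s (Ordinal hk); rewrite /= => ->; exact: ltn_ord.
- move=> k hk; have hk' : k < M by lia.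
  have := nth_oneline s (Ordinal hk); have := nth_oneline s (Ordinal hk'); rewrite /= => -> -> /val_inj /perm_inj.
  by move/(congr1 val) => /=; lia.
Qed.

Theorem mainTheorem2 (n : nat) : 2 <= n -> #|C321 n| = #|A_set n.-1|.
Proof.
case: n => [|[|m]] // _ /=.
have -> : C321 m.+2 = (@G m.+1) @: A_set m.+1.
  apply/setP => p; rewrite inE; apply/andP/imsetP.
  - case=> cyc n321; have [s e] := G_surj cyc; exists s => //.
    rewrite inE; case: (boolP (avoids_all_six (oneline s))) => // h.
    have := proj2 (key s (ltn0Sn m)) h; rewrite e => h2.
    by rewrite h2 in n321.
  - case=> s sA ->; split; first exact: G_cyclic.
    apply/negP => /(key s (ltn0Sn m)) h; rewrite inE in sA; by rewrite sA in h.
by rewrite card_imset //; exact: G_inj.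
Qed.
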